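(* Let $d$ be a positive integer. For every point $z\in\mathbb{P}^d_\circ$ there exist a set $\mathcal{K}$ of $d$ points of $\mathbb{P}^d_\circ$, all of $1$-norm $\|z\|_1$, and a partition of $\mathcal{K}$ into $d/|C\cdot z|$ subsets, each of cardinality $|C\cdot z|$, such that every subset $\mathcal{L}$ of this partition satisfies $$\kappa(C\cdot z)=\sum_{x\in\mathcal{L}}|x_i|\quad\text{for every } i\in\{1,\dots,d\},$$ and, for each such $\mathcal{L}$, there exists a point of $\mathbb{P}^d_\circ$ whose orbit under $C$ contains $\mathcal{L}$.
   Context: A point of $\mathbb{Z}^d$ is primitive if its coordinates are relatively prime; $\mathbb{P}^d_\circ$ denotes the set of primitive points of $\mathbb{Z}^d$ whose first non-zero coordinate is positive. For a finite $\mathcal{X}\subset\mathbb{R}^d$, $\kappa(\mathcal{X})=\max_{1\le i\le d}\sum_{x\in\mathcal{X}}|x_i|$. Let $\sigma:\mathbb{R}^d\to\mathbb{R}^d$ be the cyclic coordinate shift $\sigma(x_1,\dots,x_d)=(x_d,x_1,\dots,x_{d-1})$, and let $\tau(x)=\sigma(x)$ if $x_d\ge 0$ and $\tau(x)=-\sigma(x)$ otherwise. $C$ is the cyclic group (of order $d$) generated by $\tau$, and $C\cdot z=\{g(z):g\in C\}$ is the orbit of $z$; it is a subset of $\mathbb{P}^d_\circ$ when $z\in\mathbb{P}^d_\circ$. *)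

(* Defs.v *)
From HB Require Import structures.
From mathcomp Require Import all_boot all_order all_algebra.
From mathcomp Require Import finmap.
Set Implicit Arguments. Unset Strict Implicit. Unset Printing Implicit Defensive.
Import Order.TTheory GRing.Theory Num.Theory.
Local Open Scope fset_scope.

(* Points of Z^d, coordinates indexed by 'I_d (coordinate i+1 of the paper
   is index i here). *)
Definition pt (d : nat) := {ffun 'I_d -> int}.

Definition primitive d (x : pt d) : bool :=
  (\big[gcdn/0%N]_(i < d) absz (x i)) == 1%N.

Definition first_nz_pos d (x : pt d) : bool :=
  [exists i : 'I_d, (0 < x i)%R && [forall j : 'I_d, (j < i)%N ==> (x j == 0%R)]].

Definition inP d (x : pt d) : bool := primitive x && first_nz_pos x.

Definition norm1 d (x : pt d) : nat := \sum_(i < d) absz (x i).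

Definition sigma d (x : pt d) : pt d := [ffun i : 'I_d => x (ord_pred i)].

(* tau(x) = sigma(x) if x_d >= 0, -sigma(x) otherwise *)
Definition tau d (x : pt d) : pt d :=
  if [forall i : 'I_d, (i.+1 == d) ==> (0 <= x i)%R] then sigma x
  else [ffun i => - sigma x i]%R.

(* orbit C.z = { tau^k z : 0 <= k < d } (C cyclic of order d generated by tau) *)
Definition Corbit d (z : pt d) : {fset pt d} :=
  [fset iter k (@tau d) z | k in iota 0 d].

Definition kappa d (X : {fset pt d}) : nat :=
  \max_(i < d) \sum_(x <- X) absz (x i).

(* Main.v *)
Require Import Defs.
From HB Require Import structures.
From mathcomp Require Import all_boot all_order all_algebra.
From mathcomp Require Import finmap.
From mathcomp Require Import zify.
Set Implicit Arguments. Unset Strict Implicit. Unset Printing Implicit Defensive.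
Import Order.TTheory GRing.Theory Num.Theory.

Section Idx.
Variable d : nat.

Definition pk (k : nat) (i : 'I_d) : 'I_d := iter k (@ord_pred d) i.
Definition qk (k : nat) (i : 'I_d) : 'I_d := iter k (@ordS d) i.

Lemma qk_val k (i : 'I_d) : val (qk k i) = (i + k) %% d.
Proof.
elim: k => [|k IH] /=; first by rewrite addn0 modn_small.
rewrite /qk /= -/(qk k i) /= IH. by rewrite -addn1 modnDml addn1 addnS.
Qed.

Lemma pkqk k i : pk k (qk k i) = i.
Proof.
elim: k i => [|k IH] i //.
by rewrite /pk /qk iterSr iterS ordSK; apply: IH.
Qed.

Lemma qkpk k i : qk k (pk k i) = i.
Proof.
elim: k i => [|k IH] i //.
by rewrite /pk /qk iterSr iterS ord_predK; apply: IH.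
Qed.

Lemma pk_inj k : injective (pk k).
Proof. exact: (can_inj (qkpk k)). Qed.

Lemma pkD a b i : pk (a + b) i = pk a (pk b i).
Proof. by rewrite /pk iterD. Qed.

Lemma qk_fix e (i : 'I_d) : 0 < e < d -> qk e i != i.
Proof.
move=> /andP[e0 ed]; apply/eqP => /(congr1 (@nat_of_ord d)); rewrite qk_val.
have id := ltn_ord i.
case: (ltnP (i + e) d) => h.
  rewrite modn_small //; lia.
have -> : i + e = (i + e - d) + d by lia.
rewrite modnDr modn_small; lia.
Qed.

Lemma pk_fix e (i : 'I_d) : 0 < e < d -> pk e i != i.
Proof.
move=> h; apply/eqP => E; move: (qk_fix i h); rewrite -{1}E qkpk eqxx //.
Qed.

Lemma qk_d i : qk d i = i.
Proof. apply: val_inj; rewrite qk_val /= modnDr modn_small //. Qed.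

Lemma pk_d i : pk d i = i.
Proof. by rewrite -{1}(qk_d i) pkqk. Qed.

Lemma pk_injk c c' (i : 'I_d) : c < d -> c' < d -> pk c i = pk c' i -> c = c'.
Proof.
wlog lt : c c' / c <= c'.
  move=> W hc hc' E; case: (leqP c c') => h; first exact: W.
  by symmetry; apply: W => //; exact: ltnW.
move=> hc hc' E; rewrite leq_eqVlt in lt; case/orP: lt => [/eqP //|lt].
have E2 : pk (c' - c) (pk c i) = pk c i.
  rewrite -pkD subnK; [by rewrite E|exact: ltnW].
have F : 0 < c' - c < d by apply/andP; split; lia.
by move: (pk_fix (pk c i) F); rewrite E2 eqxx.
Qed.

Lemma pk_mod k i : pk k i = pk (k %% d) i.
Proof.
have M : forall q j, pk (q * d) j = j.
  by elim=> [|q IH] j //; rewrite mulSn pkD IH pk_d.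
by rewrite {1}(divn_eq k d) pkD M.
Qed.

Lemma ord_pred_val (j : 'I_d) : val (ord_pred j) = if val j == 0 then d.-1 else (val j).-1.
Proof.
rewrite /=; have jd := ltn_ord j.
case: eqP => [->|h].
  rewrite add0n modn_small //; lia.
have -> : (j + d).-1 = j.-1 + d by lia.
rewrite modnDr modn_small //; lia.
Qed.

Lemma pk_bij k : bijective (pk k).
Proof. exact: (Bijective (@qkpk k) (@pkqk k)). Qed.

Lemma sum_orbit (A : 'I_d -> nat) (i : 'I_d) :
  \sum_(0 <= k < d) A (pk k i) = \sum_j A j.
Proof.
rewrite big_mkord.
have inj : injective (fun k : 'I_d => pk k i).
  move=> k k' /pk_injk E; apply: val_inj; apply: E; exact: ltn_ord.
by rewrite [RHS](reindex_inj inj).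
Qed.

Lemma sum_periodic (g : nat -> nat) m r :
  (forall k, g (k + m) = g k) ->
  \sum_(0 <= k < r * m) g k = r * \sum_(0 <= k < m) g k.
Proof.
move=> P; elim: r => [|r IH]; first by rewrite !mul0n big_geq.
have Q : forall q k, g (k + q * m) = g k.
  by elim=> [|q IHq] k; rewrite ?mul0n ?addn0 // mulSn addnA IHq P.
rewrite (mulSn r m) [m + _]addnC (big_cat_nat _ (leq_addr m (r * m))) //= IH.
have B : \sum_(r * m <= i < r * m + m) g i = \sum_(0 <= k < m) g (k + r * m).
  by rewrite -{1}[r * m]add0n big_addn addKn.
rewrite B mulSn addnC; congr (_ + _).
by apply: eq_bigr => k _; rewrite Q.
Qed.

Lemma chunk (A : 'I_d -> nat) m r :
  0 < m -> m * r = d -> (forall j, A (pk m j) = A j) ->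
  forall i, (\sum_(0 <= k < m) A (pk k i)) * r = \sum_j A j.
Proof.
move=> m0 mr P i.
have S : forall n, n = r * m -> \sum_(0 <= k < n) A (pk k i) = r * \sum_(0 <= k < m) A (pk k i).
  move=> n ->; apply: (sum_periodic (g := fun k => A (pk k i))) => k.
  by rewrite addnC pkD P.
have E : d = r * m by rewrite mulnC mr.
by rewrite -(sum_orbit A i) (S d E) mulnC.
Qed.

End Idx.


Section Tau.
Variable d : nat.
Implicit Types x y : pt d.

Lemma tau_sh k x : exists s : int, (s = 1 \/ s = -1)%R /\
  forall i, iter k (@tau d) x i = (s * x (pk k i))%R.
Proof.
elim: k => [|k [s [hs IH]]].
  by exists 1%R; split; [left|move=> i; rewrite mul1r].
have P1 : forall i, pk k.+1 i = pk k (ord_pred i) by move=> i; exact: iterSr.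
rewrite iterS /tau; case: ifP => _.
  exists s; split => // i; by rewrite /sigma ffunE IH P1.
exists (- s)%R; split; first by case: hs => ->; [right|left; rewrite opprK].
by move=> i; rewrite /sigma !ffunE IH P1 mulNr.
Qed.

Lemma abs_iter k x i : absz (iter k (@tau d) x i) = absz (x (pk k i)).
Proof.
have [s [hs ->]] := tau_sh k x.
by case: hs => ->; rewrite ?mul1r ?mulN1r ?abszN.
Qed.

Lemma prim_abs x y : (forall i, absz (x i) = absz (y i)) -> primitive x = primitive y.
Proof. by move=> h; rewrite /primitive; congr (_ == _); apply: eq_bigr => i _; rewrite h. Qed.

Lemma prim_iter k x : primitive (iter k (@tau d) x) = primitive x.
Proof.
rewrite /primitive; congr (_ == _).
under eq_bigr do rewrite abs_iter.
rewrite [RHS](reindex_inj (@pk_inj d k)) //.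
Qed.

Lemma norm_iter k x : norm1 (iter k (@tau d) x) = norm1 x.
Proof.
rewrite /norm1; under eq_bigr do rewrite abs_iter.
rewrite [RHS](reindex_inj (@pk_inj d k)) //.
Qed.

Lemma fnz_tau x : first_nz_pos x -> first_nz_pos (tau x).
Proof.
case/existsP=> i /andP[xi /forallP h0].
have d0 : 0 < d by case: i {xi h0} => /= m; lia.
have dl : d.-1 < d by lia.
pose lst : 'I_d := Ordinal dl.
have cond : [forall i : 'I_d, (i.+1 == d) ==> (0 <= x i)%R] = (0 <= x lst)%R.
  apply/forallP/idP => [H|H j]; first by move: (H lst); rewrite /= prednK // eqxx.
  apply/implyP => /eqP E; have -> : j = lst by apply: val_inj => /=; lia.
  done.
pose j0 : 'I_d := Ordinal d0.
have pj0 : ord_pred j0 = lst by apply: val_inj; rewrite ord_pred_val.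
rewrite /tau cond.
have [xl|xl|xl] := ltrgtP (x lst) 0%R.
- apply/existsP; exists j0; apply/andP; split.
    by rewrite !ffunE pj0 oppr_gt0.
  by apply/forallP => j; apply/implyP.
- apply/existsP; exists j0; apply/andP; split.
    by rewrite !ffunE pj0.
  by apply/forallP => j; apply/implyP.
- idtac.
  have il : i.+1 < d.
    have : i != lst by apply/eqP => E; move: xi; rewrite E xl ltxx.
    move/eqP => ne; case: i ne {xi h0} => /= m hm ne.
    suff : m != d.-1 by lia.
    by apply/eqP => E; apply: ne; apply: val_inj.
  pose j1 : 'I_d := Ordinal il.
  have pj1 : ord_pred j1 = i by apply: val_inj; rewrite ord_pred_val.
  apply/existsP; exists j1; rewrite /sigma ffunE pj1 xi /=.
  apply/forallP => j; apply/implyP => /= hj; rewrite ffunE.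
  case: (eqVneq (val j) 0) => hj0.
    have -> : ord_pred j = lst by apply: val_inj; rewrite ord_pred_val hj0.
    by rewrite xl.
  apply: (implyP (h0 (ord_pred j))); rewrite ord_pred_val (negbTE hj0).
  move: hj0 hj; rewrite /=; lia.
Qed.

Lemma inP_tau x : inP x -> inP (tau x).
Proof.
case/andP=> hp hf; apply/andP; split; last exact: fnz_tau.
by move: hp; rewrite -(prim_iter 1 x).
Qed.

Lemma inP_iter k x : inP x -> inP (iter k (@tau d) x).
Proof. by elim: k => //= k IH hx; apply: inP_tau; apply: IH. Qed.

Lemma noPneg x : first_nz_pos x -> first_nz_pos [ffun i => - x i]%R -> False.
Proof.
case/existsP=> i /andP[xi /forallP h0]; case/existsP=> i' /andP[xi' /forallP h0'].
rewrite ffunE oppr_gt0 in xi'.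
case: (ltngtP i i') => h.
- by move: (implyP (h0' i) h); rewrite ffunE oppr_eq0 => /eqP E; move: xi; rewrite E ltxx.
- by move: (implyP (h0 i') h) => /eqP E; move: xi'; rewrite E ltxx.
- have E : i = i' by apply: val_inj.
  by move: (lt_trans xi' xi); rewrite E ltxx.
Qed.

Lemma iter_d x : inP x -> iter d (@tau d) x = x.
Proof.
move=> hx; have [s [hs E]] := tau_sh d x.
have hi := inP_iter d hx.
case: hs => hs.
  by apply/ffunP => i; rewrite E hs mul1r pk_d.
exfalso; case/andP: hx => _ hx; case/andP: hi => _ hi.
apply: (noPneg hx); move: hi; congr first_nz_pos; apply/ffunP => i.
by rewrite E hs mulN1r pk_d ffunE.
Qed.

End Tau.


Section Orbit.
Variable d : nat.
Implicit Types x y : pt d.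

Lemma iter_mul (f : pt d -> pt d) x p q : iter p f x = x -> iter (q * p) f x = x.
Proof. by move=> h; elim: q => [|q IH] //; rewrite mulSn iterD IH h. Qed.

Lemma orbit_period x : inP x -> exists p, [/\ 0 < p, p %| d, iter p (@tau d) x = x,
  (forall e, 0 < e < p -> iter e (@tau d) x != x) &
  [/\ {in iota 0 p &, injective (fun k => iter k (@tau d) x)}, #|` Corbit x| = p & Corbit x = [fset iter k (@tau d) x | k in iota 0 p]%fset]].
Proof.
move=> hx.
have hd := iter_d hx.
have d0 : 0 < d.
  case/andP: hx => _ /existsP [i _]; case: i => /= m; lia.
have ex : exists n, (0 < n) && (iter n (@tau d) x == x) by exists d; rewrite d0 hd eqxx.
case: (ex_minnP ex) => p /andP[p0 /eqP hp] hmin.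
have pd : p <= d by apply: hmin; rewrite d0 hd eqxx.
have hmod : forall k, iter k (@tau d) x = iter (k %% p) (@tau d) x.
  by move=> k; rewrite {1}(divn_eq k p) addnC iterD iter_mul.
have nfix : forall e, 0 < e < p -> iter e (@tau d) x != x.
  move=> e /andP[e0 ep]; apply/negP => /eqP E.
  by have := hmin e; rewrite e0 E eqxx => /(_ isT); lia.
have inj : {in iota 0 p &, injective (fun k => iter k (@tau d) x)}.
  move=> c c'; rewrite !mem_iota !add0n => hc hc' E.
  wlog lt : c c' hc hc' E / c <= c'.
    by move=> W; case: (leqP c c') => h; [apply: W|symmetry; apply: W => //; apply: ltnW].
  case: (ltngtP c c') lt => // h _.
  have E2 : iter (p - c' + c) (@tau d) x = x.
    by rewrite iterD E -iterD subnK // ltnW.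
  have F : 0 < p - c' + c < p by apply/andP; split; lia.
  by move: (nfix _ F); rewrite E2 eqxx.
have CE : Corbit x = [fset iter k (@tau d) x | k in iota 0 p]%fset.
  apply/fsetP => w; apply/imfsetP/imfsetP => [[k hk ->]|[k hk ->]].
    exists (k %% p); first by rewrite mem_iota add0n ltn_pmod.
    exact: hmod.
  exists k => //; move: hk; rewrite !mem_iota !add0n => hk; lia.
exists p; split => //.
- rewrite /dvdn; apply/eqP.
  have := hmod d; rewrite hd => E.
  case: (posnP (d %% p)) => // h.
  have F : 0 < d %% p < p by rewrite h ltn_pmod.
  by move: (nfix _ F); rewrite -E eqxx.
- split=> //; rewrite CE card_in_imfset //= undup_id ?iota_uniq // size_iota //.
Qed.

End Orbit.


Lemma jm_lt m r j k : j < r -> k < m -> j * m + k < m * r.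
Proof.
move=> hj hk; have : j.+1 * m <= r * m by rewrite leq_mul2r hj orbT.
rewrite mulSn mulnC; lia.
Qed.

Lemma jm_inj m j k j' k' : k < m -> k' < m -> j * m + k = j' * m + k' -> j = j' /\ k = k'.
Proof.
move=> hk hk' E.
have m0 : 0 < m by lia.
have Ej : j = j'.
  by move: (congr1 (divn^~ m) E); rewrite !divnMDl // !divn_small // !addn0.
by split => //; move: E; rewrite Ej => /addnI.
Qed.


Lemma mem_iota0 k n : (k \in iota 0 n) = (k < n).
Proof. by rewrite mem_iota add0n. Qed.

Lemma framework d m r N kap (x : nat -> pt d) :
 0 < m -> m * r = d ->
 (forall c c', c < d -> c' < d -> x c = x c' -> c = c') ->
 (forall c, c < d -> inP (x c) /\ norm1 (x c) = N) ->
 (forall j (i : 'I_d), j < r -> kap = \sum_(0 <= k < m) absz (x (j * m + k) i)) ->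
 (forall j, j < r -> exists y, inP y /\ forall k, k < m -> x (j * m + k) \in Corbit y) ->
 exists (K : {fset pt d}) (P : {fset {fset pt d}}),
    #|` K| = d /\
    (forall x, x \in K -> inP x /\ norm1 x = N) /\
    (forall x, x \in K <-> exists2 L, L \in P & x \in L) /\
    (forall L, L \in P -> (L `<=` K)%fset) /\
    (forall L1 L2, L1 \in P -> L2 \in P -> L1 != L2 -> (L1 `&` L2)%fset = fset0) /\
    #|` P| = r /\
    (forall L, L \in P -> [/\ #|` L| = m, (forall i : 'I_d, kap = \sum_(x <- L) absz (x i)) &
               exists y : pt d, inP y /\ (L `<=` Corbit y)%fset]).
Proof.
move=> m0 mr xinj xP xsum xorb.
have jmd : forall j k, j < r -> k < m -> j * m + k < d by move=> j k hj hk; rewrite -mr; exact: jm_lt.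
pose Lj j := [fset x (j * m + k)%N | k in iota 0 m]%fset.
have Ljinj : forall j, j < r -> {in iota 0 m &, injective (fun k => x (j * m + k))}.
  move=> j hj k k'; rewrite !mem_iota0 => hk hk' E.
  have := xinj _ _ (jmd _ _ hj hk) (jmd _ _ hj hk') E.
  by move/(jm_inj hk hk') => [].
have Lj_card : forall j, j < r -> #|` Lj j| = m.
  move=> j hj; rewrite card_in_imfset; last exact: Ljinj.
  by rewrite /= undup_id ?iota_uniq // size_iota.
have Ljinj2 : {in iota 0 r &, injective Lj}.
  move=> j j'; rewrite !mem_iota0 => hj hj' E.
  have : x (j * m + 0) \in Lj j' by rewrite -E; apply/imfsetP; exists 0 => //; rewrite mem_iota.
  case/imfsetP => k; rewrite mem_iota0 => hk.
  move/(xinj _ _ (jmd _ _ hj m0) (jmd _ _ hj' hk)).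
  by move/(jm_inj m0 hk) => [].
exists [fset x c | c in iota 0 d]%fset, [fset Lj j | j in iota 0 r]%fset.
split.
  rewrite card_in_imfset //= ?undup_id ?iota_uniq ?size_iota //.
  by move=> c c'; rewrite !mem_iota0; apply: xinj.
split.
  by move=> w /imfsetP [c]; rewrite mem_iota0 => hc ->; apply: xP.
split.
  move=> w; split.
    case/imfsetP => c; rewrite mem_iota0 => hc ->.
    have hq : c %/ m < r by rewrite ltn_divLR // mulnC mr.
    exists (Lj (c %/ m)); first by apply/imfsetP; exists (c %/ m) => //; rewrite mem_iota.
    apply/imfsetP; exists (c %% m); first by rewrite mem_iota0 ltn_pmod.
    by rewrite -divn_eq.
  case=> L /imfsetP [j]; rewrite mem_iota0 => hj ->.
  case/imfsetP => k; rewrite mem_iota0 => hk ->.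
  apply/imfsetP; exists (j * m + k) => //; rewrite mem_iota0; exact: jmd.
split.
  move=> L /imfsetP [j]; rewrite mem_iota0 => hj ->.
  apply/fsubsetP => w /imfsetP [k]; rewrite mem_iota0 => hk ->.
  apply/imfsetP; exists (j * m + k) => //; rewrite mem_iota0; exact: jmd.
split.
  move=> L1 L2 /imfsetP [j]; rewrite mem_iota0 => hj ->.
  move=> /imfsetP [j']; rewrite mem_iota0 => hj' -> ne.
  apply/fsetP => w; rewrite in_fsetI in_fset0; apply/negbTE/negP => /andP[].
  case/imfsetP => k; rewrite mem_iota0 => hk ->.
  case/imfsetP => k'; rewrite mem_iota0 => hk'.
  move/(xinj _ _ (jmd _ _ hj hk) (jmd _ _ hj' hk')).
  by move/(jm_inj hk hk') => [E _]; move: ne; rewrite E eqxx.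
split.
  by rewrite card_in_imfset //= undup_id ?iota_uniq // size_iota.
move=> L /imfsetP [j]; rewrite mem_iota0 => hj ->.
split.
- exact: Lj_card.
- move=> i; rewrite big_imfset; last exact: Ljinj.
  rewrite /= undup_id ?iota_uniq //.
  by rewrite (xsum j i hj) /index_iota subn0.
- have [y [hy hk]] := xorb j hj.
  exists y; split => //; apply/fsubsetP => w /imfsetP [k]; rewrite mem_iota0 => hk' ->.
  exact: hk.
Qed.


Lemma sign_sq (s : int) : (s = 1 \/ s = -1)%R -> (s * s = 1)%R.
Proof. by case=> ->; rewrite ?mulr1 ?mulrNN ?mulr1. Qed.

Lemma sign_mul (s t : int) : (s = 1 \/ s = -1)%R -> (t = 1 \/ t = -1)%R -> (s * t = 1 \/ s * t = -1)%R.
Proof. by case=> ->; case=> ->; rewrite ?mul1r ?mulN1r ?opprK; auto. Qed.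

Lemma trel d c c' (u v : pt d) : c <= c' -> iter c (@tau d) u = iter c' (@tau d) v ->
  exists s : int, (s = 1 \/ s = -1)%R /\ forall j, u j = (s * v (pk (c' - c) j))%R.
Proof.
move=> cc E.
have [s1 [h1 E1]] := tau_sh c u; have [s2 [h2 E2]] := tau_sh c' v.
exists (s1 * s2)%R; split; first exact: sign_mul.
move=> j; have := congr1 (fun w : pt d => w (qk c j)) E; rewrite /= E1 E2 pkqk.
have -> : pk c' (qk c j) = pk (c' - c) j by rewrite -{1}(subnK cc) pkD pkqk.
move=> H; rewrite -mulrA -H mulrA sign_sq // mul1r //.
Qed.

Lemma rel_sym (P : nat -> nat -> Prop) :
  (forall c c', c <= c' -> P c c') -> (forall c c', P c c' -> P c' c) -> forall c c', P c c'.
Proof. by move=> H S c c'; case: (leqP c c') => h; [apply: H| apply: S; apply: H; apply: ltnW]. Qed.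


Unset Implicit Arguments.
Local Open Scope fset_scope.

Theorem proposition6p1 (d : nat) (hd : (0 < d)%N) (z : pt d) (hz : inP z) :
  exists (K : {fset pt d}) (P : {fset {fset pt d}}),
    #|` K| = d /\
    (forall x, x \in K -> inP x /\ norm1 x = norm1 z) /\
    (* P is a partition of K *)
    (forall x, x \in K <-> exists2 L, L \in P & x \in L) /\
    (forall L, L \in P -> L `<=` K) /\
    (forall L1 L2, L1 \in P -> L2 \in P -> L1 != L2 -> L1 `&` L2 = fset0) /\
    #|` P| = (d %/ #|` Corbit z|)%N /\
        (forall L, L \in P ->
           [/\ #|` L| = #|` Corbit z|,
               (forall i : 'I_d, kappa (Corbit z) = \sum_(x <- L) absz (x i)) &
               exists y : pt d, inP y /\ L `<=` Corbit y]).
Proof.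
have [p [p0 pd hp nfix [pinj -> CE]]] := orbit_period hz.
set N := norm1 z.
set kap := kappa (Corbit z).
set r := (d %/ p)%N.
have mr : (p * r = d)%N by rewrite /r mulnC divnK.
have r0 : (0 < r)%N by rewrite /r divn_gt0 // dvdn_leq.
pose a (i : 'I_d) := absz (z i).
have aper : forall j, a (pk p j) = a j.
  by move=> j; rewrite /a -abs_iter hp.
have csum : forall i, ((\sum_(0 <= k < p) a (pk k i)) * r = N)%N.
  by move=> i; rewrite (chunk (A := a)) //.
have i1 : 'I_d := Ordinal hd.
have kapE : (kap * r = N)%N.
  have cst : forall i, (\sum_(0 <= k < p) a (pk k i))%N = (\sum_(0 <= k < p) a (pk k i1))%N.
    by move=> i; apply/eqP; rewrite -(eqn_pmul2r r0) !csum.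
  have colE : forall i, (\sum_(w <- Corbit z) absz (w i) = \sum_(0 <= k < p) a (pk k i))%N.
    move=> i; rewrite CE big_imfset //= undup_id ?iota_uniq //.
    rewrite /index_iota subn0; apply: eq_bigr => k _; exact: abs_iter.
  suff -> : kap = (\sum_(0 <= k < p) a (pk k i1))%N by apply: csum.
  apply/eqP; rewrite eqn_leq; apply/andP; split.
    by apply/bigmax_leqP => i _; rewrite colE cst.
  by rewrite (leq_trans _ (leq_bigmax i1)) // colE.
have kapU : forall s, (s * r = N)%N -> kap = s.
  by move=> s hs; apply/eqP; rewrite -(eqn_pmul2r r0) kapE hs.
have iterd : forall c j k, (c < d)%N -> iter (j * p + k) (@tau d) z = iter (j * p + k) (@tau d) z by [].
have caseA : forall y, inP y -> (forall i, absz (y i) = a i) ->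
    (forall e (s : int), (0 < e < d)%N -> (s = 1 \/ s = -1)%R -> ~ (forall j, y j = (s * y (pk e j))%R)) ->
  exists (K : {fset pt d}) (P : {fset {fset pt d}}),
    #|` K| = d /\
    (forall x, x \in K -> inP x /\ norm1 x = N) /\
    (forall x, x \in K <-> exists2 L, L \in P & x \in L) /\
    (forall L, L \in P -> L `<=` K) /\
    (forall L1 L2, L1 \in P -> L2 \in P -> L1 != L2 -> L1 `&` L2 = fset0) /\
    #|` P| = r /\
        (forall L, L \in P ->
           [/\ #|` L| = p,
               (forall i : 'I_d, kap = \sum_(x <- L) absz (x i)) &
               exists y : pt d, inP y /\ L `<=` Corbit y]).
  move=> y hy ya full.
  have normy : norm1 y = N by rewrite /N /norm1; apply: eq_bigr => i _; rewrite ya.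
  apply: (framework (x := fun c => iter c (@tau d) y)) => //.
  - suff H : forall c c', (c < c')%N -> (c' < d)%N -> iter c (@tau d) y <> iter c' (@tau d) y.
      move=> c c' hc hc' E; case: (ltngtP c c') => // h.
        by case: (H _ _ h hc').
      by case: (H _ _ h hc).
    move=> c c' h hc' E.
    have [s [hs Es]] := trel (ltnW h) E.
    apply: (full (c' - c)%N s _ hs Es); apply/andP; split; lia.
  - by move=> c _; split; [exact: inP_iter|rewrite norm_iter].
  - move=> j i hj; apply: kapU; rewrite -(csum (pk (j * p) i)).
    congr (_ * _)%N; apply: eq_bigr => k _.
    by rewrite abs_iter ya addnC pkD.
  - move=> j hj; exists y; split => // k hk; apply: in_imfset; rewrite /= mem_iota0 -mr.
    exact: jm_lt.
have [hprim hfnz] := andP hz.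
have [i0 /andP [zi0 /forallP h0]] := existsP hfnz.
case: (eqVneq p d) => [epd|pnd].
  apply: (caseA z hz) => //.
  move=> e s /andP[e0 ed] hs H.
  have [s' [hs' E]] := tau_sh e z.
  have H' : forall j, z (pk e j) = (s * z j)%R.
    by move=> j; rewrite [in RHS]H mulrA sign_sq // mul1r.
  have E2 : forall j, iter e (@tau d) z j = (s' * s * z j)%R.
    by move=> j; rewrite E H' mulrA.
  case: (sign_mul hs' hs) => hss.
    have : iter e (@tau d) z = z by apply/ffunP => j; rewrite E2 hss mul1r.
    by apply/eqP; apply: nfix; rewrite e0 epd.
  have hi := inP_iter e hz; case/andP: hi => _ hi.
  apply: (noPneg hfnz); move: hi; congr first_nz_pos; apply/ffunP => j.
  by rewrite E2 hss mulN1r ffunE.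
have pltd : (p < d)%N by rewrite ltn_neqAle pnd dvdn_leq.
have ai0 : (0 < a i0)%N by rewrite /a absz_gt0 gt_eqF.
have az : forall j, (a j == 0%N) = (z j == 0%R) by move=> j; rewrite /a absz_eq0.
have zlt : forall j : 'I_d, (j < i0)%N -> a j = 0%N.
  by move=> j hj; apply/eqP; rewrite az; exact: (implyP (h0 j) hj).
pose y1 : pt d := [ffun i => (Posz (a i))].
pose fl (t : 'I_d) : pt d := [ffun i => if i == t then (- (Posz (a i)))%R else (Posz (a i))].
have ya1 : forall i, absz (y1 i) = a i by move=> i; rewrite ffunE.
have yaf : forall t i, absz (fl t i) = a i by move=> t i; rewrite ffunE; case: (i == t); rewrite ?abszN.
have inP1 : inP y1.
  apply/andP; split; first by rewrite (prim_abs (y := z)).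
  apply/existsP; exists i0; rewrite ffunE ltz_nat ai0 /=.
  by apply/forallP => j; apply/implyP => hj; rewrite ffunE zlt.
have inPf : forall t, t != i0 -> inP (fl t).
  move=> t ht; apply/andP; split; first by rewrite (prim_abs (y := z)) // => i; rewrite yaf.
  apply/existsP; exists i0; rewrite ffunE eq_sym (negbTE ht) ltz_nat ai0 /=.
  by apply/forallP => j; apply/implyP => hj; rewrite ffunE zlt //; case: (j == t).
have [s0 [hs0 E0]] := tau_sh p z.
have zper : forall j, z j = (s0 * z (pk p j))%R by move=> j; rewrite -E0 hp.
case: (pickP (fun t => (t != i0) && (z t != 0%R))) => [t0 /andP[t0n zt0] | single]; last first.
  exfalso.
  have hq := single (qk p i0).
  have nz : z (qk p i0) != 0%R.
    rewrite zper pkqk mulf_eq0 negb_or (gt_eqF zi0) andbT.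
    by case: hs0 => ->.
  move: hq; rewrite nz andbT => /negbT; rewrite negbK => /eqP E.
  by move: (qk_fix i0 (e := p)); rewrite E eqxx p0 pltd => /(_ isT).
have at0 : (0 < a t0)%N by rewrite /a absz_gt0.
have fl_neg : forall j, (fl t0 j < 0)%R -> j = t0.
  move=> j; rewrite ffunE; case: (j =P t0) => // _.
have fl_pos : forall j, j != t0 -> (0 < a j)%N -> (0 < fl t0 j)%R.
  by move=> j hj hj'; rewrite ffunE (negbTE hj) ltz_nat.
have fi0 : (0 < fl t0 i0)%R by apply: fl_pos => //; rewrite eq_sym.
case: (pickP (fun w => [&& w != i0, w != t0 & z w != 0%R])) => [w /and3P[wi0 wt0 zw] | two].
  apply: (caseA (fl t0) (inPf t0 t0n) (yaf t0)).
  move=> e s /andP[e0 ed] hs H.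
  case: hs => hs; subst s.
    have := H (qk e t0); rewrite pkqk mul1r => E.
    have : (fl t0 (qk e t0) < 0)%R.
      by rewrite E ffunE eqxx oppr_lt0 ltz_nat.
    move/fl_neg => E2.
    by move: (qk_fix t0 (e := e)); rewrite E2 eqxx e0 ed => /(_ isT).
  have negp : forall j, (0 < fl t0 j)%R -> pk e j = t0.
    by move=> j hj; apply: fl_neg; move: hj; rewrite H mulN1r oppr_gt0.
  have E1 := negp _ fi0.
  have E2 : pk e w = t0 by apply: negp; apply: fl_pos => //; rewrite /a absz_gt0.
  by move: wi0; rewrite -E1 in E2; rewrite (pk_inj E2) eqxx.
have supp : forall v : pt d, (forall j, absz (v j) = a j) -> forall j, v j != 0%R -> j = i0 \/ j = t0.
  move=> v va j; rewrite -absz_eq0 va az => zj.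
  have := two j; rewrite zj andbT.
  case: (eqVneq j i0) => [->|ji0]; first by left.
  by case: (eqVneq j t0) => [->|//]; right.
have pki0 : pk p i0 = t0.
  have : z (pk p i0) != 0%R by rewrite -az aper az gt_eqF.
  move/(supp z (fun j => erefl)) => [E|//].
  by move: (pk_fix i0 (e := p)); rewrite E eqxx p0 pltd => /(_ isT).
have pkt0 : pk p t0 = i0.
  have : z (pk p t0) != 0%R by rewrite -az aper az.
  move/(supp z (fun j => erefl)) => [//|E].
  by move: (pk_fix t0 (e := p)); rewrite E eqxx p0 pltd => /(_ isT).
have r2 : r = 2.
  case: (ltngtP r 2) => // h.
    have r1 : r = 1 by lia.
    by move: mr pnd; rewrite r1 muln1 => ->; rewrite eqxx.
  have h3 : (p * 3 <= p * r)%N by rewrite leq_mul2l h orbT.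
  have F : (0 < p + p < d)%N by apply/andP; split; lia.
  by move: (pk_fix i0 F); rewrite pkD pki0 pkt0 eqxx.
have d2 : d = (p + p)%N by rewrite -mr r2 muln2 addnn.
have sup : forall u v : pt d, u i0 != 0%R -> (forall j, absz (v j) = a j) ->
    forall e (s : int), (0 < e < p)%N -> (s = 1 \/ s = -1)%R -> ~ (forall j, u j = (s * v (pk e j))%R).
  move=> u v ui0 va e s /andP[e0 ep] hs H.
  have : v (pk e i0) != 0%R by move: ui0; rewrite H mulf_eq0 negb_or => /andP[].
  move/(supp v va) => [E|E].
    by move: (pk_fix i0 (e := e)); rewrite E eqxx e0 (ltn_trans ep pltd) => /(_ isT).
  have := pk_injk (ltn_trans ep pltd) pltd (etrans E (esym pki0)); lia.
have y1i0 : y1 i0 != 0%R by rewrite -absz_eq0 ya1 -lt0n.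
have fli0 : fl t0 i0 != 0%R by rewrite gt_eqF.
have normy : forall v : pt d, (forall j, absz (v j) = a j) -> norm1 v = N.
  by move=> v va; rewrite /N /norm1; apply: eq_bigr => i _; rewrite va.
apply: (framework (x := fun c => if (c < p)%N then iter c (@tau d) y1 else iter (c - p) (@tau d) (fl t0))) => //.
- suff H : forall c c', (c < c')%N -> (c' < d)%N ->
      (if (c < p)%N then iter c (@tau d) y1 else iter (c - p) (@tau d) (fl t0)) <>
      (if (c' < p)%N then iter c' (@tau d) y1 else iter (c' - p) (@tau d) (fl t0)).
    move=> c c' hc hc' E; case: (ltngtP c c') => // h.
      by case: (H _ _ h hc').
    by case: (H _ _ h hc); rewrite E.
  move=> c c' h hc'; rewrite d2 in hc'.
  case: (ltnP c' p) => hc'p.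
    rewrite (ltn_trans h hc'p) => E.
    have [s [hs Es]] := trel (ltnW h) E.
    by apply: (sup _ _ y1i0 ya1 (c' - c)%N s _ hs Es); apply/andP; split; lia.
  case: (ltnP c p) => hcp E.
    case: (ltngtP c (c' - p)) => hcc.
    + have [s [hs Es]] := trel (ltnW hcc) E.
      by apply: (sup _ _ y1i0 (yaf t0) (c' - p - c)%N s _ hs Es); apply/andP; split; lia.
    + have [s [hs Es]] := trel (ltnW hcc) (esym E).
      by apply: (sup _ _ fli0 ya1 (c - (c' - p))%N s _ hs Es); apply/andP; split; lia.
    + rewrite -hcc in E; have [s [hs Es]] := trel (leqnn c) E.
      rewrite subnn in Es.
      have e1 := Es i0; have e2 := Es t0.
      rewrite /pk /= !ffunE eqxx in e1 e2.
      rewrite eq_sym (negbTE t0n) in e1.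
      case: hs => hs; subst s.
        move: e2; rewrite mul1r => /eqP; rewrite -subr_eq0 opprK -mulr2n mulrn_eq0 /=.
        by move/eqP/(congr1 absz) => /= hh; move: at0; rewrite hh.
      move: e1; rewrite mulN1r => /eqP; rewrite -subr_eq0 opprK -mulr2n mulrn_eq0 /=.
      by move/eqP/(congr1 absz) => /= hh; move: ai0; rewrite hh.
  have [s [hs Es]] := trel (leq_sub2r p (ltnW h)) E.
  by apply: (sup _ _ fli0 (yaf t0) (c' - p - (c - p))%N s _ hs Es); apply/andP; split; lia.
- move=> c _; case: (c < p)%N.
    by split; [exact: inP_iter|rewrite norm_iter normy].
  by split; [apply: inP_iter; apply: inPf|rewrite norm_iter normy].
- move=> j i hj; apply: kapU; rewrite -(csum i); congr (_ * _)%N.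
  apply: eq_big_nat => k /andP[_ hk].
  rewrite r2 in hj; case: j hj => [|[|j]] // _.
    by rewrite mul0n add0n hk abs_iter ya1.
  by rewrite mul1n ltnNge leq_addr /= addKn abs_iter yaf.
- move=> j hj; rewrite r2 in hj; case: j hj => [|[|j]] // _.
    exists y1; split => // k hk; rewrite mul0n add0n hk; apply: in_imfset; rewrite /= mem_iota0.
    by apply: ltn_trans pltd.
  exists (fl t0); split; first exact: inPf.
  move=> k hk; rewrite mul1n ltnNge leq_addr /= addKn; apply: in_imfset; rewrite /= mem_iota0.
  by apply: ltn_trans pltd.
Qed.
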